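(* There exists a two-dimensional cellular automaton $(\mathcal{A}^{\mathbb{Z}^2},F)$ which is not sensitive to initial conditions and has no equicontinuous point. (In fact one can take $|\mathcal{A}|=12$ and a Moore neighborhood of radius $2$.) In particular, unlike the one-dimensional case, the classes $\mathcal{E}_q$ and $\mathcal{S}$ do not partition the set of two-dimensional cellular automata, i.e. the class $\mathcal{N}$ is nonempty.
   Context: Let $\mathcal{A}$ be a finite set and $\mathbb{M}=\mathbb{Z}^2$. The configuration space $\mathcal{A}^{\mathbb{M}}$ carries the product of discrete topologies, metrized by $d(x,y)=2^{-\min\{\|i\|_\infty : x_i\neq y_i,\ i\in\mathbb{M}\}}$. A (2D) cellular automaton is a map $F:\mathcal{A}^{\mathbb{M}}\to\mathcal{A}^{\mathbb{M}}$ of the form $F(x)_m=f((x_{m+u})_{u\in\mathbb{U}})$ for a finite neighborhood $\mathbb{U}\subset\mathbb{M}$ and a local rule $f:\mathcal{A}^{\mathbb{U}}\to\mathcal{A}$; its radius is $\max\{\|u\|_\infty:u\in\mathbb{U}\}$. A point $x$ is an equicontinuous point of $F$ if for every $\epsilon>0$ there is $\delta>0$ such that $d(x,y)<\delta$ implies $d(F^n(x),F^n(y))<\epsilon$ for all $n\in\mathbb{N}$. $F$ is sensitive if there is $\epsilon>0$ such that for all $\delta>0$ and all $x$ there exist $y$ and $n\in\mathbb{N}$ with $d(x,y)<\delta$ and $d(F^n(x),F^n(y))>\epsilon$. $\mathcal{E}_q$ denotes the class of cellular automata having at least one equicontinuous point, $\mathcal{S}$ the class of sensitive cellular automata, and $\mathcal{N}$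 the class of cellular automata that are in neither $\mathcal{E}_q$ nor $\mathcal{S}$. *)

(* Defs.v *)
From Stdlib Require Import Reals ZArith List Classical ClassicalEpsilon.
Import ListNotations.
Open Scope R_scope.

Definition cell := (Z * Z)%type.
Definition cadd (m u : cell) : cell := (fst m + fst u, snd m + snd u)%Z.
Definition normInf (i : cell) : nat := Z.to_nat (Z.max (Z.abs (fst i)) (Z.abs (snd i))).

Definition config (A : Type) := cell -> A.

Definition finite_card (A : Type) (n : nat) : Prop :=
  exists l : list A, NoDup l /\ (forall a, In a l) /\ length l = n.

Definition diff_at {A} (x y : config A) (r : nat) : Prop :=
  exists i, normInf i = r /\ x i <> y i.

Definition min_diff {A} (x y : config A) : nat :=
  epsilon (inhabits 0%nat)
    (fun r => diff_at x y r /\ forall r', diff_at x y r' -> (r <= r')%nat).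

Definition dist {A} (x y : config A) : R :=
  if excluded_middle_informative (x = y) then 0 else (/ 2) ^ (min_diff x y).

Definition is_CA {A} (F : config A -> config A) : Prop :=
  exists (U : list cell) (f : list A -> A),
    forall x m, F x m = f (map (fun u => x (cadd m u)) U).

Definition is_CA_moore {A} (F : config A -> config A) (r : nat) : Prop :=
  exists (U : list cell) (f : list A -> A),
    (forall u, In u U <-> (normInf u <= r)%nat) /\
    forall x m, F x m = f (map (fun u => x (cadd m u)) U).

Definition equicontinuous_point {A} (F : config A -> config A) (x : config A) : Prop :=
  forall eps, eps > 0 -> exists delta, delta > 0 /\
    forall y, dist x y < delta ->
      forall n : nat, dist (Nat.iter n F x) (Nat.iter n F y) < eps.

Definition sensitive {A} (F : config A -> config A) : Prop :=
  exists eps, eps > 0 /\ forall delta, delta > 0 -> forall x,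
    exists y (n : nat), dist x y < delta /\ dist (Nat.iter n F x) (Nat.iter n F y) > eps.

Definition in_Eq {A} (F : config A -> config A) : Prop :=
  exists x, equicontinuous_point F x.
Definition in_S {A} (F : config A -> config A) : Prop := sensitive F.
Definition in_N {A} (F : config A -> config A) : Prop :=
  is_CA F /\ ~ in_Eq F /\ ~ in_S F.

(* Main.v *)
Require Import Defs.
From Stdlib Require Import Reals ZArith List Lia Lra Classical ClassicalEpsilon FunctionalExtensionality.
Import ListNotations.
Open Scope Z_scope. Open Scope bool_scope.

Inductive lab := LT | LB | LW | LE | LNW | LNE | LSW | LSE.
Inductive st := Fr (b : bool) | Fi | Ii | Lc (l : lab).

Definition isFr (s : st) := match s with Fr _ => true | _ => false end.
Definition isI (s : st) := match s with Ii => true | _ => false end.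
Definition isL (s : st) := match s with Lc _ => true | _ => false end.
Definition okI s := isI s || isL s.

Definition spec l n s e w nw := match l with
| LT => isFr n && isI s && isL e && isL w && isFr nw
| LB => isI n && isFr s && isL e && isL w
| LW => isL n && isL s && isI e && isFr w
| LE => isL n && isL s && isFr e && isI w
| LNW => isFr n && isL s && isL e && isFr w && isFr nw
| LNE => isFr n && isL s && isFr e && isL w && isFr nw
| LSW => isL n && isFr s && isL e && isFr w
| LSE => isL n && isFr s && isFr e && isL w
end.

Definition rule (c n s e w nw : st) : st :=
 match c with
 | Fr _ => match s with Fr b => Fr b | _ => match w with Fr b => Fr b | _ => Fr false end end
 | Fi => Fr false
 | Ii => if okI n && okI s && okI e && okI w then Ii else Fi
 | Lc l => if spec l n s e w nw then Lc l else Fr false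
 end.

Definition zr (M : nat) : list Z := map (fun k => Z.of_nat k - Z.of_nat M) (seq 0 (2*M+1)).
Definition box (M : nat) : list cell := list_prod (zr M) (zr M).
Definition U2 := box 2.
Definition floc (l : list st) : st :=
  rule (nth 12 l (Fr false)) (nth 13 l (Fr false)) (nth 11 l (Fr false))
       (nth 17 l (Fr false)) (nth 7 l (Fr false)) (nth 8 l (Fr false)).
Definition FF (z : config st) : config st := fun m => floc (map (fun u => z (cadd m u)) U2).

Lemma cadd0 m : cadd m (0,0) = m.
Proof. destruct m; unfold cadd; simpl; f_equal; lia. Qed.

Lemma step z m : FF z m = rule (z m) (z (cadd m (0,1))) (z (cadd m (0,-1)))
   (z (cadd m (1,0))) (z (cadd m (-1,0))) (z (cadd m (-1,1))).
Proof. rewrite <- (cadd0 m) at 2. reflexivity. Qed.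

Lemma in_zr M a : In a (zr M) <-> - Z.of_nat M <= a <= Z.of_nat M.
Proof.
  unfold zr; rewrite in_map_iff; split.
  - intros [k [<- Hk]]. apply in_seq in Hk. lia.
  - intros H. exists (Z.to_nat (a + Z.of_nat M)). split. lia. apply in_seq. lia.
Qed.

Lemma in_box M p : In p (box M) <-> (normInf p <= M)%nat.
Proof.
  destruct p as [a b]. unfold box, normInf. split. intro H. apply in_prod_iff in H. rewrite !in_zr in H. simpl; lia. intro H. apply in_prod_iff. rewrite !in_zr. simpl in *; lia.
Qed.
Definition inb (K : Z) (q : cell) : bool :=
  (-K <=? fst q) && (fst q <=? K) && (-K <=? snd q) && (snd q <=? K).
Definition labk (K : Z) (p : cell) : lab :=
  let (a,b) := p in
  if b =? K+1 then (if a =? -(K+1) then LNW else if a =? K+1 then LNE else LT)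
  else if b =? -(K+1) then (if a =? -(K+1) then LSW else if a =? K+1 then LSE else LB)
  else if a =? -(K+1) then LW else LE.
Definition xk (k : nat) (p : cell) : st :=
  if inb (Z.of_nat k) p then Ii else if inb (Z.of_nat k + 1) p then Lc (labk (Z.of_nat k) p) else Fr false.

Ltac zsplit := repeat (match goal with
 | |- context [Z.leb ?a ?b] => destruct (Z.leb_spec a b)
 | |- context [Z.eqb ?a ?b] => destruct (Z.eqb_spec a b)
 end; simpl; try (exfalso; lia)); try reflexivity.

Lemma xk_fix k p : inb (Z.of_nat k + 1) p = true ->
  rule (xk k p) (xk k (cadd p (0,1))) (xk k (cadd p (0,-1))) (xk k (cadd p (1,0)))
       (xk k (cadd p (-1,0))) (xk k (cadd p (-1,1))) = xk k p.
Proof.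
  destruct p as [a b]. unfold xk, labk, inb, cadd; simpl. assert (0 <= Z.of_nat k) by lia. generalize dependent (Z.of_nat k).
  intros K HK H. zsplit.
Qed.

Lemma inb_norm k p : inb (Z.of_nat k) p = true <-> (normInf p <= k)%nat.
Proof.
  destruct p as [a b]; unfold inb, normInf; simpl.
  rewrite !Bool.andb_true_iff, !Z.leb_le. lia.
Qed.
Lemma inb_norm1 k p : inb (Z.of_nat k + 1) p = true <-> (normInf p <= k+1)%nat.
Proof. replace (Z.of_nat k + 1) with (Z.of_nat (k+1)) by lia. apply inb_norm. Qed.

Definition sk u v := isFr u = isFr v /\ isI u = isI v /\ isL u = isL v.

Lemma rule_congr c n s e w nw n' s' e' w' nw' : isFr c = false ->
  sk n n' -> sk s s' -> sk e e' -> sk w w' -> sk nw nw' ->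
  rule c n s e w nw = rule c n' s' e' w' nw'.
Proof.
  intros Hc [a1 [b1 c1]] [a2 [b2 c2]] [a3 [b3 c3]] [a4 [b4 c4]] [a5 [b5 c5]].
  destruct c as [b| | |l]; simpl in *; try discriminate; auto.
  - unfold okI; rewrite b1,c1,b2,c2,b3,c3,b4,c4; auto.
  - destruct l; simpl; rewrite ?a1,?b1,?c1,?a2,?b2,?c2,?a3,?b3,?c3,?a4,?b4,?c4,?a5,?b5,?c5; auto.
Qed.

Lemma norm_nb p d : (Z.abs (fst d) <= 1)%Z -> (Z.abs (snd d) <= 1)%Z -> (normInf (cadd p d) <= normInf p + 1)%nat.
Proof. destruct p, d; unfold normInf, cadd; simpl; lia. Qed.

Lemma rule_Fr b n s e w nw : isFr (rule (Fr b) n s e w nw) = true.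
Proof. simpl. destruct s; auto; destruct w; auto. Qed.

Lemma stable_k k y : (forall p, (normInf p <= k+2)%nat -> y p = xk k p) ->
  forall n p, (normInf p <= k+2)%nat ->
   ((normInf p <= k+1)%nat -> Nat.iter n FF y p = xk k p) /\
   ((normInf p = k+2)%nat -> isFr (Nat.iter n FF y p) = true).
Proof.
  intros Hy n. induction n as [|n IH]; intros p Hp.
  - simpl. split. intros; auto. intros He. rewrite Hy by lia. unfold xk.
    destruct (inb (Z.of_nat k) p) eqn:E1. apply inb_norm in E1; lia.
    destruct (inb (Z.of_nat k + 1) p) eqn:E2. apply inb_norm1 in E2; lia. reflexivity.
  - set (z := Nat.iter n FF y) in *.
    assert (Hsk : forall q, (normInf q <= k+2)%nat -> sk (z q) (xk k q)).
    { intros q Hq. destruct (le_lt_dec (normInf q) (k+1)).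
      - rewrite (proj1 (IH q Hq) l). repeat split.
      - assert (HF := proj2 (IH q Hq) ltac:(lia)). destruct (z q); try discriminate.
        unfold xk. destruct (inb (Z.of_nat k) q) eqn:E1. apply inb_norm in E1; lia.
        destruct (inb (Z.of_nat k + 1) q) eqn:E2. apply inb_norm1 in E2; lia. repeat split. }
    simpl Nat.iter. fold z. split.
    + intros Hp1. rewrite step. rewrite (proj1 (IH p Hp) Hp1).
      rewrite <- (xk_fix k p) at 2 by (apply inb_norm1; auto).
      apply rule_congr.
      * unfold xk. destruct (inb (Z.of_nat k) p); auto. destruct (inb (Z.of_nat k + 1) p) eqn:E; auto.
        apply inb_norm1 in Hp1. congruence.
      * apply Hsk. pose proof (norm_nb p (0,1)%Z). simpl in H. lia.
      * apply Hsk. pose proof (norm_nb p (0,-1)%Z). simpl in H. lia.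
      * apply Hsk. pose proof (norm_nb p (1,0)%Z). simpl in H. lia.
      * apply Hsk. pose proof (norm_nb p (-1,0)%Z). simpl in H. lia.
      * apply Hsk. pose proof (norm_nb p (-1,1)%Z). simpl in H. lia.
    + intros He. rewrite step. assert (HF := proj2 (IH p Hp) He).

      destruct (z p); try discriminate. apply rule_Fr.
Qed.

Definition yb (x : config st) (R : nat) (b : bool) : config st := fun p =>
  if (normInf p <=? R)%nat then x p else if (normInf p <=? R+2)%nat then Fi else Fr b.

Definition code (s : st) : nat := match s with Fr _ => 0%nat | Fi => 1%nat | Ii => 2%nat | Lc _ => 3%nat end.
Definition rank (c : nat) : nat := match c with O => O | S O => 1%nat | _ => 2%nat end.

Lemma fr_persist z p : isFr (z p) = true -> isFr (FF z p) = true.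
Proof. intro H. rewrite step. destruct (z p); try discriminate. apply rule_Fr. Qed.

Lemma fr_persist_iter y p t t' : (t <= t')%nat -> isFr (Nat.iter t FF y p) = true ->
  isFr (Nat.iter t' FF y p) = true.
Proof.
  induction 1; auto. intro H0. simpl. apply fr_persist; auto.
Qed.

Lemma outside_free x R b p t : (R + 2 < normInf p)%nat -> isFr (Nat.iter t FF (yb x R b) p) = true.
Proof.
  intro H. induction t. simpl. unfold yb.
  destruct (Nat.leb_spec (normInf p) R); try lia. destruct (Nat.leb_spec (normInf p) (R+2)); try lia. auto.
  simpl. apply fr_persist; auto.
Qed.

Lemma trans z p : code (FF z p) = code (z p) \/ (rank (code (FF z p)) < rank (code (z p)))%nat.
Proof.
  rewrite step. destruct (z p) as [bb| | |l]; simpl.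
  - destruct (z (cadd p (0,-1))); simpl; auto; destruct (z (cadd p (-1,0))); simpl; auto.
  - right; simpl; lia.
  - destruct (_ && _); simpl; auto.
  - destruct (spec _ _ _ _ _ _); simpl; auto.
Qed.

Lemma mono (g : nat -> st) : (forall t, code (g (S t)) = code (g t) \/ (rank (code (g (S t))) < rank (code (g t)))%nat) ->
  forall t0 t, (t0 <= t)%nat -> code (g t) = code (g t0) \/ (rank (code (g t)) < rank (code (g t0)))%nat.
Proof.
  intros H t0 t Hle. induction Hle; auto.
  destruct IHHle as [E|L]; destruct (H m) as [E'|L'].
  - left; congruence.
  - right; rewrite <- E; auto.
  - right; rewrite E'; auto.
  - right; lia.
Qed.

Lemma ev_const (g : nat -> st) : (forall t, code (g (S t)) = code (g t) \/ (rank (code (g (S t))) < rank (code (g t)))%nat) ->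
  exists T, forall t, (T <= t)%nat -> code (g t) = code (g T).
Proof.
  intro H.
  assert (forall r t0, (rank (code (g t0)) <= r)%nat -> exists T, forall t, (T <= t)%nat -> code (g t) = code (g T)).
  { induction r; intros t0 Hr;
    (destruct (classic (forall t, (t0 <= t)%nat -> code (g t) = code (g t0))) as [All|Ex]; [exists t0; auto|]);
    apply not_all_ex_not in Ex; destruct Ex as [t1 Ht1];
    apply Classical_Prop.imply_to_and in Ht1; destruct Ht1 as [Hle Hne];
    destruct (mono g H t0 t1 Hle) as [E|L]; try contradiction.
    - lia.
    - apply (IHr t1). lia. }
  apply (H0 2%nat 0%nat). destruct (g 0%nat) ; simpl; lia.
Qed.

Lemma unif y l : exists T, forall p, In p l -> forall t, (T <= t)%nat ->
   code (Nat.iter t FF y p) = code (Nat.iter T FF y p).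
Proof.
  induction l as [|p l [T1 H1]].
  - exists 0%nat; intros p [].
  - destruct (ev_const (fun t => Nat.iter t FF y p)) as [T0 H0].
    { intro t. apply trans. }
    exists (Nat.max T0 T1). intros q [<-|Hq] t Ht.
    + rewrite (H0 t) by lia. rewrite (H0 (Nat.max T0 T1)) by lia. auto.
    + rewrite (H1 q Hq t) by lia. rewrite (H1 q Hq (Nat.max T0 T1)) by lia. auto.
Qed.

Lemma stabstep x R b : exists T, forall t p, (T <= t)%nat ->
  code (Nat.iter (S t) FF (yb x R b) p) = code (Nat.iter t FF (yb x R b) p).
Proof.
  destruct (unif (yb x R b) (box (R+2))) as [T HT]. exists T. intros t p Ht.
  destruct (le_lt_dec (normInf p) (R+2)) as [Hin|Hout].
  - apply in_box in Hin. rewrite (HT p Hin (S t)) by lia. rewrite (HT p Hin t) by lia. auto.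
  - pose proof (outside_free x R b p (S t) Hout). pose proof (outside_free x R b p t Hout).
    destruct (Nat.iter (S t) FF (yb x R b) p); try discriminate.
    destruct (Nat.iter t FF (yb x R b) p); try discriminate. auto.
Qed.

Lemma routing w p : code (FF w (cadd p (0,-1))) = code (w (cadd p (0,-1))) ->
  isFr (w p) = true -> isFr (w (cadd p (0,-1))) = false -> isFr (w (cadd p (-1,0))) = true.
Proof.
  intros Hs Hp Hq. rewrite step in Hs.
  replace (cadd (cadd p (0,-1)) (0,1)) with p in Hs by (destruct p; unfold cadd; simpl; f_equal; lia).
  replace (cadd (cadd p (0,-1)) (-1,1)) with (cadd p (-1,0)) in Hs by (destruct p; unfold cadd; simpl; f_equal; lia).
  destruct (w p) as [bb| | |]; try discriminate.
  destruct (w (cadd p (0,-1))) as [| | |l]; try discriminate; simpl in Hs. all: try discriminate.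
  destruct (spec l _ _ _ _ _) eqn:E; simpl in Hs; try discriminate.
    destruct l; simpl in E; try discriminate; repeat rewrite Bool.andb_true_iff in E; tauto.
Qed.

Definition phi (p : cell) : Z := fst p + snd p.

Lemma far_out R p : phi p < -(2*Z.of_nat R + 6) -> (R+2 < normInf p)%nat.
Proof. destruct p; unfold phi, normInf; cbn [fst snd]; lia. Qed.

Lemma phi_S p : phi (cadd p (0,-1)) = phi p - 1.
Proof. destruct p; unfold phi, cadd; simpl; lia. Qed.
Lemma phi_W p : phi (cadd p (-1,0)) = phi p - 1.
Proof. destruct p; unfold phi, cadd; simpl; lia. Qed.

Lemma claim x R b T
  (HT : forall t p, (T <= t)%nat -> code (Nat.iter (S t) FF (yb x R b) p) = code (Nat.iter t FF (yb x R b) p)) :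
  forall t p, isFr (Nat.iter t FF (yb x R b) p) = true ->
   (phi p < -(2*Z.of_nat R + 6) \/ Z.of_nat T + phi p + (2*Z.of_nat R + 6) + 2 <= Z.of_nat t) ->
   Nat.iter t FF (yb x R b) p = Fr b.
Proof.
  induction t as [|t IH]; intros p Hf Hc.
  - assert (Hc' : phi p < -(2*Z.of_nat R + 6)) by lia. clear Hc. rename Hc' into Hc.
    pose proof (far_out R p Hc). simpl. unfold yb.
    destruct (Nat.leb_spec (normInf p) R); try lia. destruct (Nat.leb_spec (normInf p) (R+2)); try lia. auto.
  - set (z := Nat.iter t FF (yb x R b)) in *.
    change (Nat.iter (S t) FF (yb x R b)) with (FF z) in *.
    assert (Hc2 : phi p < -(2*Z.of_nat R + 6) \/ (-(2*Z.of_nat R + 6) <= phi p /\ Z.of_nat T + phi p + (2*Z.of_nat R + 6) + 2 <= Z.of_nat (S t))) by lia.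
    assert (Hzp : isFr (z p) = true).
    { destruct Hc2 as [Hc0|[Hc0 Hc1]].
      - assert (Ho := outside_free x R b p t ltac:(apply far_out; auto)). exact Ho.
      - assert (E := HT t p ltac:(lia)). change (Nat.iter (S t) FF (yb x R b)) with (FF z) in E.
        fold z in E. destruct (FF z p); try discriminate. destruct (z p); try discriminate; auto. }
    assert (IHS : isFr (z (cadd p (0,-1))) = true -> z (cadd p (0,-1)) = Fr b).
    { intro H. apply IH; auto. rewrite phi_S. lia. }
    assert (IHW : isFr (z (cadd p (-1,0))) = true -> z (cadd p (-1,0)) = Fr b).
    { intro H. apply IH; auto. rewrite phi_W. lia. }
    assert (HW : isFr (z (cadd p (0,-1))) = false -> isFr (z (cadd p (-1,0))) = true).
    { intro Hs. destruct Hc2 as [Hc0|[Hc0 Hc1]].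
      - assert (Ho := outside_free x R b (cadd p (0,-1)) t ltac:(apply far_out; rewrite phi_S; lia)).
        change (Nat.iter t FF (yb x R b)) with z in Ho. congruence.
      - apply routing; auto. apply (HT t (cadd p (0,-1))). lia. }
    rewrite step. destruct (z p); try discriminate. simpl.
    destruct (z (cadd p (0,-1))) eqn:ES.
    + apply IHS. reflexivity.
    + rewrite IHW by auto. reflexivity.
    + rewrite IHW by auto. reflexivity.
    + rewrite IHW by auto. reflexivity.
Qed.

Lemma rule_notL c n s e w nw : isL c = false -> isL (rule c n s e w nw) = false.
Proof.
  destruct c; simpl; intro H; try discriminate; auto.
  - destruct s; auto; destruct w; auto.
  - destruct (_ && _); auto.
Qed.

Lemma rule_I_bad n s e w nw : isFr e = true -> rule Ii n s e w nw = Fi.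
Proof. destruct e; try discriminate; intros _; simpl; destruct (okI n), (okI s), (okI w); reflexivity. Qed.

Lemma yb_nfr x R b q : (forall p, isFr (x p) = false) -> (normInf q <= R+2)%nat -> isFr (yb x R b q) = false.
Proof.
  intros Hx Hq. unfold yb. destruct (Nat.leb_spec (normInf q) R); auto.
  destruct (Nat.leb_spec (normInf q) (R+2)); auto; lia.
Qed.

Lemma noL x R b (Hx : forall p, isFr (x p) = false) :
  forall t p, (1 <= t)%nat -> isL (Nat.iter t FF (yb x R b) p) = false.
Proof.
  induction t as [|t IH]; intros p Ht; [lia|].
  destruct t as [|t].
  - simpl. rewrite step. destruct (yb x R b p) eqn:Ep; try (apply rule_notL; reflexivity).
    assert (Hp : (normInf p <= R)%nat).
    { unfold yb in Ep. destruct (Nat.leb_spec (normInf p) R); auto.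
      destruct (Nat.leb_spec (normInf p) (R+2)); discriminate. }
    assert (Hn := yb_nfr x R b (cadd p (0,1)) Hx ltac:(pose proof (norm_nb p (0,1)%Z); simpl in *; lia)).
    assert (Hs := yb_nfr x R b (cadd p (0,-1)) Hx ltac:(pose proof (norm_nb p (0,-1)%Z); simpl in *; lia)).
    assert (He := yb_nfr x R b (cadd p (1,0)) Hx ltac:(pose proof (norm_nb p (1,0)%Z); simpl in *; lia)).
    assert (Hw := yb_nfr x R b (cadd p (-1,0)) Hx ltac:(pose proof (norm_nb p (-1,0)%Z); simpl in *; lia)).
    simpl. destruct l; simpl; rewrite ?Hn, ?Hs, ?He, ?Hw, ?Bool.andb_false_r, ?Bool.andb_false_l; reflexivity.
  - change (Nat.iter (S (S t)) FF (yb x R b)) with (FF (Nat.iter (S t) FF (yb x R b))).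
    rewrite step. apply rule_notL. apply IH. lia.
Qed.

Lemma ray x R b (Hx : forall p, isFr (x p) = false) :
  forall d, (d <= R+3)%nat -> isFr (Nat.iter (2*d+1) FF (yb x R b) (Z.of_nat (R+3-d), 0)) = true.
Proof.
  induction d as [|d IH]; intro Hd.
  - apply outside_free. unfold normInf; cbn [fst snd]; lia.
  - set (q := (Z.of_nat (R+3 - S d), 0)).
    assert (Eq : cadd q (1,0) = (Z.of_nat (R+3-d), 0)) by (unfold q, cadd; cbn [fst snd]; f_equal; lia).
    assert (HE := IH ltac:(lia)). rewrite <- Eq in HE.
    set (z := Nat.iter (2*d+1) FF (yb x R b)) in *.
    replace (2 * S d + 1)%nat with (S (S (2*d+1))) by lia.
    change (Nat.iter (S (S (2*d+1))) FF (yb x R b)) with (FF (FF z)).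
    assert (HL := noL x R b Hx (2*d+1) q ltac:(lia)). fold z in HL.
    destruct (z q) eqn:Ez; try discriminate.
    + apply fr_persist, fr_persist. rewrite Ez; reflexivity.
    + apply fr_persist. rewrite step, Ez. reflexivity.
    + rewrite step. rewrite (step z q), Ez. rewrite rule_I_bad by auto. reflexivity.
Qed.

Lemma final x R b c : ((isFr (x c) = true /\ (normInf c <= R)%nat) \/ ((forall p, isFr (x p) = false) /\ c = (0,0))) ->
  exists N, forall n, (N <= n)%nat -> Nat.iter n FF (yb x R b) c = Fr b.
Proof.
  intro H. destruct (stabstep x R b) as [T HT].
  assert (Ht0 : exists t0, isFr (Nat.iter t0 FF (yb x R b) c) = true).
  { destruct H as [[Hc Hn]|[Hx ->]].
    - exists 0%nat. simpl. unfold yb. destruct (Nat.leb_spec (normInf c) R); auto; lia.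
    - exists (2*(R+3)+1)%nat. pose proof (ray x R b Hx (R+3) ltac:(lia)).
      replace (R + 3 - (R + 3))%nat with 0%nat in H by lia. exact H. }
  destruct Ht0 as [t0 Ht0].
  exists (Nat.max t0 (Z.to_nat (Z.of_nat T + phi c + (2*Z.of_nat R + 6) + 2))).
  intros n Hn. apply (claim x R b T HT).
  - apply fr_persist_iter with t0; auto. lia.
  - right. lia.
Qed.

Local Open Scope R_scope.

Lemma least_exists (P : nat -> Prop) n : P n -> exists m, P m /\ forall r, P r -> (m <= r)%nat.
Proof.
  induction n as [n IH] using lt_wf_ind. intros Hn.
  destruct (classic (exists r, (r < n)%nat /\ P r)) as [[r [Hr Pr]]|Hno].
  - exact (IH r Hr Pr).
  - exists n. split; auto. intros r Pr. destruct (le_lt_dec n r); auto.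
    exfalso; apply Hno; eauto.
Qed.

Lemma md_spec {A} (x y : config A) i : x i <> y i ->
  diff_at x y (min_diff x y) /\ forall r, diff_at x y r -> (min_diff x y <= r)%nat.
Proof.
  intro H. unfold min_diff. apply epsilon_spec.
  apply least_exists with (normInf i). exists i; auto.
Qed.

Lemma pow_half_le a b : (b <= a)%nat -> (/2)^a <= (/2)^b.
Proof.
  intro H. replace a with (b + (a - b))%nat by lia. generalize (a - b)%nat as d.
  induction d. rewrite Nat.add_0_r; lra.
  rewrite Nat.add_succ_r. simpl. assert (0 <= (/2)^(b+d)) by (apply pow_le; lra). lra.
Qed.

Lemma half_pos n : 0 < (/2)^n.
Proof. apply pow_lt; lra. Qed.

Lemma dist_ge {A} (x y : config A) i : x i <> y i -> (/2)^(normInf i) <= Defs.dist x y.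
Proof.
  intro H. unfold Defs.dist. destruct (excluded_middle_informative (x = y)) as [e|ne].
  - subst; contradiction.
  - apply pow_half_le. apply (md_spec x y i H). exists i; auto.
Qed.

Lemma dist_le {A} (x y : config A) r : (forall i, (normInf i <= r)%nat -> x i = y i) ->
   Defs.dist x y <= (/2)^(S r).
Proof.
  intro H. unfold Defs.dist. destruct (excluded_middle_informative (x = y)) as [e|ne].
  - left; apply half_pos.
  - assert (exists i, x i <> y i) as [i Hi].
    { apply not_all_ex_not. intro Hall. apply ne. apply functional_extensionality; auto. }
    destruct (md_spec x y i Hi) as [[j [Hj Hxy]] _].
    apply pow_half_le. destruct (le_lt_dec (min_diff x y) r); [|lia].
    exfalso; apply Hxy, H; lia.
Qed.

Lemma dist_lt_agree {A} (x y : config A) r : Defs.dist x y < (/2)^r ->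
  forall i, (normInf i <= r)%nat -> x i = y i.
Proof.
  intros H i Hi. destruct (classic (x i = y i)) as [e|ne]; auto.
  exfalso. pose proof (dist_ge x y i ne). pose proof (pow_half_le _ _ Hi). lra.
Qed.

Lemma small_pow eps : 0 < eps -> exists N, (/2)^N < eps.
Proof.
  intro H. destruct (pow_lt_1_zero (/2)) with eps as [N HN]; auto.
  rewrite Rabs_right; lra.
  exists N. specialize (HN N (le_n _)). rewrite Rabs_right in HN; auto.
  apply Rle_ge, pow_le; lra.
Qed.

Lemma no_sens : ~ sensitive FF.
Proof.
  intros [eps [He H]]. destruct (small_pow eps He) as [k Hk].
  destruct (H ((/2)^(k+2)) (half_pos _) (xk k)) as [y [n [Hd Hgt]]].
  assert (Hag := dist_lt_agree (xk k) y (k+2) Hd).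
  assert (S1 := stable_k k y (fun p Hp => eq_sym (Hag p Hp)) n).
  assert (S2 := stable_k k (xk k) (fun p Hp => eq_refl) n).
  assert (Hle : Defs.dist (Nat.iter n FF (xk k)) (Nat.iter n FF y) <= (/2)^(S (k+1))).
  { apply dist_le. intros i Hi. rewrite (proj1 (S1 i ltac:(lia)) Hi), (proj1 (S2 i ltac:(lia)) Hi). auto. }
  pose proof (pow_half_le (S (k+1)) k ltac:(lia)). lra.
Qed.

Lemma no_eq : ~ (exists x, equicontinuous_point FF x).
Proof.
  intros [x Heq].
  assert (Hc : exists c, forall R, (normInf c <= R)%nat ->
     (isFr (x c) = true /\ (normInf c <= R)%nat) \/ ((forall p, isFr (x p) = false) /\ c = (0,0)%Z)).
  { destruct (classic (exists p, isFr (x p) = true)) as [[c Hc]|Hno].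
    - exists c; intros R HR; left; auto.
    - exists (0,0)%Z; intros R HR; right; split; auto. intro p.
      destruct (isFr (x p)) eqn:E; auto. exfalso; eauto. }
  destruct Hc as [c Hc].
  destruct (Heq ((/2)^(normInf c)) (half_pos _)) as [delta [Hdel Hdl]].
  destruct (small_pow delta Hdel) as [N HN].
  set (R := Nat.max (normInf c) N).
  assert (Hy : forall b, Defs.dist x (yb x R b) < delta).
  { intro b. assert (Defs.dist x (yb x R b) <= (/2)^(S R)).
    { apply dist_le. intros i Hi. unfold yb. destruct (Nat.leb_spec (normInf i) R); auto; lia. }
    pose proof (pow_half_le (S R) N ltac:(lia)). lra. }
  destruct (final x R false c (Hc R ltac:(lia))) as [N0 H0].
  destruct (final x R true c (Hc R ltac:(lia))) as [N1 H1].
  set (n := Nat.max N0 N1).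
  specialize (H0 n ltac:(lia)). specialize (H1 n ltac:(lia)).
  assert (D0 := Hdl _ (Hy false) n). assert (D1 := Hdl _ (Hy true) n).
  destruct (classic (Nat.iter n FF x c = Fr false)) as [E|E].
  - assert (Nat.iter n FF x c <> Nat.iter n FF (yb x R true) c) by congruence.
    pose proof (dist_ge _ _ _ H). lra.
  - assert (Nat.iter n FF x c <> Nat.iter n FF (yb x R false) c) by congruence.
    pose proof (dist_ge _ _ _ H). lra.
Qed.

Theorem mainTheorem1 :
  exists (A : Type) (F : config A -> config A),
    finite_card A 12 /\ is_CA_moore F 2 /\ is_CA F /\
    ~ sensitive F /\ ~ (exists x, equicontinuous_point F x) /\ in_N F.
Proof.
  exists st, FF.
  assert (HM : is_CA_moore FF 2).
  { exists U2, floc. split. intro u. unfold U2. apply in_box. intros; reflexivity. }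
  assert (HC : is_CA FF).
  { destruct HM as [U [f [_ Hf]]]. exists U, f. exact Hf. }
  split; [|split; [exact HM|split; [exact HC|split; [exact no_sens|split; [exact no_eq|]]]]].
  - exists [Fr false; Fr true; Fi; Ii; Lc LT; Lc LB; Lc LW; Lc LE; Lc LNW; Lc LNE; Lc LSW; Lc LSE].
    split; [|split].
    + repeat constructor; simpl; intuition discriminate.
    + intros [[]| | |[]]; simpl; tauto.
    + reflexivity.
  - split; [exact HC|split; [exact no_eq|exact no_sens]].
Qed.
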